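(* Let $n\le -1$ be an odd integer. Then $$q_n(w)=\frac{p_n(v)\,p_{6-n}(v)}{v^{2-n}}\qquad\text{where } w=2-\frac{(v+1)(v+2)}{v},$$ as an identity of rational functions in $v$.
   Context: Define polynomials $p_n\in\mathbb{Z}[v]$ for odd $n$ as follows. For odd $n\le -1$: $p_{-1}=v^3+2v^2+v+1$, $p_{-3}=-(v^5+3v^4+4v^3+5v^2+4v+2)$, and $p_n=-\big((v^2+v+2)p_{n+2}+v^2p_{n+4}\big)$ for odd $n<-3$. For odd $n\ge 7$: $p_7=-(v^3+2v^2+8v+8)$, $p_9=v^5+4v^4+10v^3+16v^2+24v+16$, and $p_n=-\big((v^2+v+2)p_{n-2}+v^2p_{n-4}\big)$ for odd $n>9$. Define $q_n\in\mathbb{Z}[w]$ for odd $n\le -1$ by $q_{-1}=w^3-w^2+2w-7$, $q_{-3}=w^5-2w^4-2w^3+5w^2+3w-9$, $q_{-5}=w^7-2w^6-4w^5+8w^4+4w^3-7w^2+2w-7$, and $q_n=(w^2-1)(q_{n+2}-q_{n+4})+q_{n+6}$ for odd $n<-5$. *)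

(* Defs.v *)
From HB Require Import structures.
From mathcomp Require Import all_boot all_order all_algebra fraction.
Set Implicit Arguments. Unset Strict Implicit. Unset Printing Implicit Defensive.
Import Order.TTheory GRing.Theory Num.Theory.
Local Open Scope ring_scope.

(* p_{-(2k+1)} for k : nat *)
Fixpoint pneg (k : nat) : {poly int} :=
  match k with
  | 0%N => 'X^3 + 2%:P * 'X^2 + 'X + 1
  | 1%N => - ('X^5 + 3%:P * 'X^4 + 4%:P * 'X^3 + 5%:P * 'X^2 + 4%:P * 'X + 2%:P)
  | S ((S k2) as k1) => - (('X^2 + 'X + 2%:P) * pneg k1 + 'X^2 * pneg k2)
  end.

(* p_{2k+7} for k : nat *)
Fixpoint ppos (k : nat) : {poly int} :=
  match k with
  | 0%N => - ('X^3 + 2%:P * 'X^2 + 8%:P * 'X + 8%:P)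
  | 1%N => 'X^5 + 4%:P * 'X^4 + 10%:P * 'X^3 + 16%:P * 'X^2 + 24%:P * 'X + 16%:P
  | S ((S k2) as k1) => - (('X^2 + 'X + 2%:P) * ppos k1 + 'X^2 * ppos k2)
  end.

(* q_{-(2k+1)} for k : nat, polynomial in the variable w *)
Fixpoint qneg (k : nat) : {poly int} :=
  match k with
  | 0%N => 'X^3 - 'X^2 + 2%:P * 'X - 7%:P
  | 1%N => 'X^5 - 2%:P * 'X^4 - 2%:P * 'X^3 + 5%:P * 'X^2 + 3%:P * 'X - 9%:P
  | 2%N => 'X^7 - 2%:P * 'X^6 - 4%:P * 'X^5 + 8%:P * 'X^4 + 4%:P * 'X^3
             - 7%:P * 'X^2 + 2%:P * 'X - 7%:P
  | S ((S ((S k3) as k2)) as k1) => ('X^2 - 1) * (qneg k1 - qneg k2) + qneg k3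
  end.

(* p_n for odd integers n; p_n := 0 outside the defined range (never used) *)
Definition p (n : int) : {poly int} :=
  if n <= -1 then pneg ((`|n|%N - 1) %/ 2)
  else if 7 <= n then ppos ((`|n|%N - 7) %/ 2) else 0.

(* q_n for odd integers n <= -1; q_n := 0 otherwise (never used) *)
Definition q (n : int) : {poly int} :=
  if n <= -1 then qneg ((`|n|%N - 1) %/ 2) else 0.

(* The field of rational functions in v (over Q, realised as the fraction
   field of Z[v]). *)
Notation ratfun := {fraction {poly int}}.

Definition toRF (a : {poly int}) : ratfun := @FracField.tofrac _ a.

Definition vv : ratfun := toRF 'X.

Definition ww : ratfun := 2 - (vv + 1) * (vv + 2) / vv.

Definition evalRF (f : {poly int}) (x : ratfun) : ratfun :=
  (map_poly (fun c : int => toRF c%:P) f).[x].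

(* Main.v *)
Require Import Defs.
From HB Require Import structures.
From mathcomp Require Import all_boot all_order all_algebra fraction.
From Stdlib Require Import Ring.
Import Order.TTheory GRing.Theory Num.Theory.
Local Open Scope ring_scope.

Definition F : Type := ratfun.
Definition fzero : F := 0.
Definition fone : F := 1.
Definition fadd (x y : F) : F := (x : ratfun) + y.
Definition fmul (x y : F) : F := (x : ratfun) * y.
Definition fopp (x : F) : F := - (x : ratfun).
Definition fsub (x y : F) : F := fadd x (fopp y).

Lemma Fth : @ring_theory F fzero fone fadd fmul fsub fopp (@eq F).
Proof.
rewrite /fzero /fone /fadd /fmul /fsub /fopp.
constructor; intros; rewrite ?addrA ?mulrA ?add0r ?mul1r //.
- by rewrite addrC. - by rewrite mulrC. - by rewrite mulrDl. - by rewrite subrr.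
Qed.
Add Ring Fring : Fth.

Lemma faddE (x y : ratfun) : fadd x y = x + y. Proof. by []. Qed.
Lemma fmulE (x y : ratfun) : fmul x y = x * y. Proof. by []. Qed.
Lemma foppE (x : ratfun) : fopp x = - x. Proof. by []. Qed.
Lemma fzeroE : fzero = 0. Proof. by []. Qed.
Lemma foneE : fone = 1. Proof. by []. Qed.
Lemma fI (x y : F) : @eq F x y -> @eq ratfun x y. Proof. by []. Qed.

Ltac fring :=
  rewrite ?exprS ?expr0 ?mulrS ?mulr0n;
  rewrite -?foppE -?fmulE -?faddE -?fzeroE -?foneE;
  apply: fI; ring.


Definition g0 := (toRF \o (@polyC int)).
Lemma evalE f x : evalRF f x = (map_poly g0 f).[x]. Proof. by []. Qed.
Lemma evD a b x : evalRF (a + b) x = evalRF a x + evalRF b x.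
Proof. by rewrite !evalE rmorphD hornerD. Qed.
Lemma evN a x : evalRF (- a) x = - evalRF a x.
Proof. by rewrite !evalE rmorphN hornerN. Qed.
Lemma evB a b x : evalRF (a - b) x = evalRF a x - evalRF b x.
Proof. by rewrite evD evN. Qed.
Lemma evM a b x : evalRF (a * b) x = evalRF a x * evalRF b x.
Proof. by rewrite !evalE rmorphM hornerM. Qed.
Lemma evX x : evalRF 'X x = x.
Proof. by rewrite !evalE map_polyX hornerX. Qed.
Lemma evXn n x : evalRF ('X^n) x = x ^+ n.
Proof. by rewrite !evalE map_polyXn hornerXn. Qed.
Lemma evC c x : evalRF c%:P x = toRF c%:P.
Proof. by rewrite !evalE map_polyC hornerC. Qed.
Lemma ev1 x : evalRF 1 x = 1.
Proof. by rewrite !evalE rmorph1 hornerC. Qed.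

Lemma tD a b : toRF (a + b) = toRF a + toRF b. Proof. exact: rmorphD. Qed.
Lemma tB a b : toRF (a - b) = toRF a - toRF b. Proof. exact: rmorphB. Qed.
Lemma tN a : toRF (- a) = - toRF a. Proof. exact: rmorphN. Qed.
Lemma tM a b : toRF (a * b) = toRF a * toRF b. Proof. exact: rmorphM. Qed.
Lemma tXn n : toRF ('X^n) = vv ^+ n. Proof. by rewrite /vv /toRF rmorphXn. Qed.
Lemma tX : toRF 'X = vv. Proof. by []. Qed.
Lemma t1 : toRF 1 = 1. Proof. exact: rmorph1. Qed.
Lemma tCn n : toRF ((n%:R : int)%:P) = n%:R.
Proof. by rewrite polyCMn polyC1 /toRF rmorphMn rmorph1. Qed.
Lemma tCnn n : toRF (n%:R) = n%:R.
Proof. by rewrite /toRF rmorphMn rmorph1. Qed.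
Lemma vv_neq0 : vv != 0.
Proof. by rewrite /vv /toRF tofrac_eq0 polyX_eq0. Qed.

Ltac pushall :=
  rewrite ?(evD, evB, evN, evM, evXn, evX, evC, ev1);
  rewrite ?(tD, tB, tN, tM, tXn, tX, tCn, tCnn, t1) /ww.

Ltac fringH H H2 :=
  rewrite ?exprS ?expr0 ?mulrS ?mulr0n;
  rewrite -?foppE -?fmulE -?faddE -?fzeroE -?foneE;
  apply: fI; ring [H H2].

Lemma base0 : evalRF (qneg 0) ww * (vv^+2)^+0 * vv^+3 = toRF (pneg 0) * toRF (ppos 0).
Proof.
rewrite [qneg 0]/= [pneg 0]/= [ppos 0]/=.
pushall.
have H : vv * vv^-1 = 1 by rewrite mulfV // vv_neq0.
set iv := vv^-1 in H *.
have H' : @eq F (fmul vv iv) fone := H.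
fringH H' H'.
Qed.

Lemma base1 : evalRF (qneg 1) ww * (vv^+2)^+1 * vv^+3 = toRF (pneg 1) * toRF (ppos 1).
Proof.
rewrite [qneg 1]/= [pneg 1]/= [ppos 1]/=.
pushall.
have H : vv * vv^-1 = 1 by rewrite mulfV // vv_neq0.
set iv := vv^-1 in H *.
have H' : @eq F (fmul vv iv) fone := H.
fringH H' H'.
Qed.

Lemma base2 : evalRF (qneg 2) ww * (vv^+2)^+2 * vv^+3 = toRF (pneg 2) * toRF (ppos 2).
Proof.
rewrite [qneg 2]/= [pneg 2]/= [ppos 2]/=.
pushall.
have H : vv * vv^-1 = 1 by rewrite mulfV // vv_neq0.
set iv := vv^-1 in H *.
have H' : @eq F (fmul vv iv) fone := H.
fringH H' H'.
Qed.

Definition AA : ratfun := vv^+2 + vv + 2%:R.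
Definition Tq k := evalRF (qneg k) ww.
Definition Xp k := toRF (pneg k).
Definition Yp k := toRF (ppos k).

Lemma recX k : Xp k.+2 = - (AA * Xp k.+1 + vv^+2 * Xp k).
Proof. by rewrite /Xp [pneg k.+2]/= tN tD !tM !tD tXn tX tCn. Qed.
Lemma recY k : Yp k.+2 = - (AA * Yp k.+1 + vv^+2 * Yp k).
Proof. by rewrite /Yp [ppos k.+2]/= tN tD !tM !tD tXn tX tCn. Qed.
Lemma recT k : Tq k.+3 = (ww^+2 - 1) * (Tq k.+2 - Tq k.+1) + Tq k.
Proof. by rewrite /Tq [qneg k.+3]/= evD evM evB evXn ev1 evB. Qed.

Lemma wA : ww = - AA * vv^-1.
Proof.
apply: (mulIf vv_neq0). rewrite divfK ?vv_neq0 //.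
rewrite /ww /AA mulrBl divfK ?vv_neq0 //. fring.
Qed.

Lemma solve (a b c e : ratfun) : a * b = c -> b * e = 1 -> a = c * e.
Proof. by move=> <- H; rewrite -mulrA H mulr1. Qed.

Definition Pm k := Tq k * (vv^+2)^+k * vv^+3 = Xp k * Yp k.

Lemma step k : Pm k -> Pm k.+1 -> Pm k.+2 -> Pm k.+3.
Proof.
rewrite /Pm => h0 h1 h2.
rewrite ![(vv^+2)^+_.+1]exprS in h1 h2 *.
set P := (vv^+2)^+k in h0 h1 h2 *.
have Hv : vv * vv^-1 = 1 by rewrite mulfV // vv_neq0.
have HP : P * P^-1 = 1 by rewrite mulfV //; do 2 apply: expf_neq0; exact: vv_neq0.
rewrite recT wA.
set iv := vv^-1 in Hv *. set iP := P^-1 in HP.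
have Hv' : @eq F (fmul vv iv) fone := Hv.
have HP' : @eq F (fmul P iP) fone := HP.
rewrite -mulrA in h0. rewrite -mulrA in h1. rewrite -mulrA in h2.
have e0 : Tq k = Xp k * Yp k * (iP * iv^+3).
  by apply: (@solve _ _ _ _ h0); clear -Hv' HP'; fringH Hv' HP'.
have e1 : Tq k.+1 = Xp k.+1 * Yp k.+1 * (iP * iv^+5).
  by apply: (@solve _ _ _ _ h1); clear -Hv' HP'; fringH Hv' HP'.
have e2 : Tq k.+2 = Xp k.+2 * Yp k.+2 * (iP * iv^+7).
  by apply: (@solve _ _ _ _ h2); clear -Hv' HP'; fringH Hv' HP'.
rewrite e0 e1 e2.
rewrite !recX !recY.
clear -Hv' HP'. fringH Hv' HP'.
Qed.

Lemma mainP k : Pm k.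
Proof.
suff: Pm k /\ Pm k.+1 /\ Pm k.+2 by case.
elim: k => [|k [h0 [h1 h2]]].
  by split; [exact: base0 | split; [exact: base1 | exact: base2]].
by split=> //; split=> //; exact: step.
Qed.

Lemma int_aux (n : int) k : n = - (Posz (k.*2.+1)) -> 6 - n = Posz (k.*2 + 7) /\ 2 - n = Posz (k.*2 + 3).
Proof.
move=> ->. rewrite opprK. split.
- rewrite addrC -PoszD. congr Posz.
  have -> : (1 + (1 + (1 + (1 + (1 + 1)))))%N = 6%N by [].
  by rewrite addSnnS.
- rewrite addrC -PoszD. congr Posz.
  have -> : (1 + 1)%N = 2%N by [].
  by rewrite addSnnS.
Qed.

Theorem lemma3p1 (n : int) (hn : n <= -1) (hodd : odd `|n|%N) :
  evalRF (q n) ww = toRF (p n) * toRF (p (6 - n)) / vv ^ (2 - n).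
Proof.
have hneg : n < 0 by apply: (le_lt_trans hn).
have Hm : `|n|%N = (`|n|%N./2).*2.+1.
  by rewrite -[X in X = _]odd_double_half hodd add1n.
move: Hm; set k := (`|n|%N./2) => Hm.
have nE : n = - Posz (k.*2.+1) by rewrite -Hm ltz0_abs // opprK.
have [E6 E2] := int_aux _ _ nE.
rewrite /q /p E6 E2 hn Hm.
have c1 : (Posz (k.*2 + 7) <= -1) = false by [].
have c2 : (7 <= Posz (k.*2 + 7)) = true by rewrite lez_nat leq_addl.
rewrite c1 c2.
have -> : ((k.*2.+1 - 1) %/ 2)%N = k by rewrite subn1 /= -muln2 mulnK.
have -> : ((`|Posz (k.*2 + 7)|%N - 7) %/ 2)%N = k by rewrite /= addnK -muln2 mulnK.
rewrite -exprnP.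
have -> : vv ^+ (k.*2 + 3) = (vv^+2)^+k * vv^+3 by rewrite exprD -exprM mul2n.
have := mainP k. rewrite /Pm /Tq /Xp /Yp => <-.
rewrite -[evalRF _ _ * _ * _]mulrA mulfK //.
have v0 := vv_neq0.
by rewrite mulf_eq0 !expf_eq0 (negbTE v0) !andbF.
Qed.
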